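(* Let $\Omega$ be the closure of a bounded domain in $\mathbb{R}^d$, let $X$ be a Banach space of functions on $\Omega$ with $C(\Omega)\subset X$ and $\|g\|_X\le C_X\|g\|_{C(\Omega)}$ for all $g\in C(\Omega)$, and let $K$ be a compact subset of $C(\Omega)$. Let ${\bf x}=(x_1,\dots,x_m)$ with $x_i\in\Omega$, let $f\in K$ and $w:=\lambda_{\bf x}(f)$. If $\varepsilon>0$ and $g_\varepsilon\in C(\Omega)$ satisfies $\|w-\lambda_{\bf x}(g_\varepsilon)\|\le\varepsilon$ and $\operatorname{dist}(g_\varepsilon,K)_{C(\Omega)}\le\varepsilon$, then $$\|f-g_\varepsilon\|_X\le C_X\varepsilon+2R(K(w,2\varepsilon))_X .$$
   Context: $\lambda_{\bf x}(g):=(g(x_1),\dots,g(x_m))$ for $g\in C(\Omega)$; on $\mathbb{R}^m$, $\|v\|:=\big[\frac1m\sum_{j=1}^m|v_j|^2\big]^{1/2}$. $\operatorname{dist}(g,K)_{C(\Omega)}:=\inf_{h\in K}\|g-h\|_{C(\Omega)}$ (sup norm). $K_{w'}:=\{h\in K:\lambda_{\bf x}(h)=w'\}$, $K(w,\varepsilon):=\bigcup_{w'\in\mathbb{R}^m,\ \|w'-w\|\le\varepsilon}K_{w'}$. For $S\subset X$, $R(S)_X:=\inf\{r:\ S\subset B(z,r)_X\text{ for some }z\in X\}$ (Chebyshev radius in $X$). *)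

(* Defs.v *)
From HB Require Import structures.
From mathcomp Require Import all_boot all_order all_algebra.
From mathcomp Require Import all_classical all_reals all_analysis.
Set Implicit Arguments. Unset Strict Implicit. Unset Printing Implicit Defensive.
Import Order.TTheory GRing.Theory Num.Theory.
Import numFieldNormedType.Exports.
Local Open Scope classical_set_scope.
Local Open Scope ring_scope.

Definition closure_of_bounded_domain {R : realType} {d : nat}
  (Om : set 'rV[R]_d) : Prop :=
  exists D : set 'rV[R]_d,
    [/\ open D, connected D, D !=set0, bounded_set D & Om = closure D].

(* g in C(Omega): continuous on Omega (values outside Omega are irrelevant) *)
Definition CO {R : realType} {d : nat} (Om : set 'rV[R]_d)
  (g : 'rV[R]_d -> R) : Prop := {within Om, continuous g}.

Definition supnorm {R : realType} {d : nat} (Om : set 'rV[R]_d)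
  (g : 'rV[R]_d -> R) : R := sup [set `|g x| | x in Om].

Definition lambda {R : realType} {d m : nat} (x : 'I_m -> 'rV[R]_d)
  (g : 'rV[R]_d -> R) : 'I_m -> R := fun j => g (x j).

Definition mnorm {R : realType} {m : nat} (v : 'I_m -> R) : R :=
  Num.sqrt (m%:R^-1 * \sum_(j < m) `|v j| ^+ 2).

Definition distC {R : realType} {d : nat} (Om : set 'rV[R]_d)
  (g : 'rV[R]_d -> R) (K : set ('rV[R]_d -> R)) : R :=
  inf [set supnorm Om (fun y => g y - h y) | h in K].

Definition Kweps {R : realType} {d m : nat} (x : 'I_m -> 'rV[R]_d)
  (K : set ('rV[R]_d -> R)) (w : 'I_m -> R) (eps : R) : set ('rV[R]_d -> R) :=
  [set h | K h /\ exists w' : 'I_m -> R,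
      mnorm (fun j => w' j - w j) <= eps /\ lambda x h = w'].

(* Chebyshev radius in X (balls taken closed; the infimum is the same) *)
Definition chebR {R : realType} {X : normedModType R} (S : set X) : R :=
  inf [set r : R | exists z : X, S `<=` [set y | `|y - z| <= r]].

(* Main.v *)
Require Import Defs.
From HB Require Import structures.
From mathcomp Require Import all_boot all_order all_algebra.
From mathcomp Require Import all_classical all_reals all_analysis.
From mathcomp Require Import ring lra.
Import Order.TTheory GRing.Theory Num.Theory.
Import numFieldNormedType.Exports.
Local Open Scope classical_set_scope.
Local Open Scope ring_scope.

Section S.
Variables (R : realType) (d : nat) (Om : set 'rV[R]_d).

Lemma sup_pt (u : 'rV[R]_d -> R) M t :
  (forall t, Om t -> `|u t| <= M) -> Om t -> `|u t| <= supnorm Om u.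
Proof.
move=> HM Ot; apply: ub_le_sup; last by exists t.
by exists M => _ [s Os <-]; exact: HM.
Qed.

Lemma supnorm_le (u : 'rV[R]_d -> R) c :
  Om !=set0 -> (forall t, Om t -> `|u t| <= c) -> supnorm Om u <= c.
Proof.
move=> [t Ot] H; apply: ge_sup; first by exists `|u t|, t.
by move=> _ [s Os <-]; exact: H.
Qed.

Lemma supnorm_ge0 (u : 'rV[R]_d -> R) : Om !=set0 -> 0 <= supnorm Om u.
Proof.
move=> [t Ot].
have [ub|nub] := pselect (has_ubound [set `|u x| | x in Om]).
  apply: (@le_trans _ _ `|u t|) => //; apply: ub_le_sup => //; by exists t.
rewrite /supnorm sup_out //; by case.
Qed.

Lemma mnorm0 (m : nat) (v : 'I_m -> R) : 0 <= mnorm v.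
Proof. exact: sqrtr_ge0. Qed.

Lemma sq_ineq (b c : R) : `|b + c| ^+ 2 <= 2 * `|b| ^+ 2 + 2 * `|c| ^+ 2.
Proof.
have h1 := ler_normD b c; have h2 := normr_ge0 (b + c).
have h3 := normr_ge0 b; have h4 := normr_ge0 c.
set x := `|b + c| in h1 h2 *; set y := `|b| in h1 h3 *; set z := `|c| in h1 h4 *.
have h5 : 0 <= (y + z - x) * (y + z + x).
  by apply: mulr_ge0; [rewrite subr_ge0 | rewrite !addr_ge0].
have h6 : 0 <= (y - z) ^+ 2 by exact: sqr_ge0.
nra.
Qed.

Lemma mnorm_tri (m : nat) (b c : 'I_m -> R) e :
  0 <= e -> (forall j, `|b j| <= e) -> mnorm c <= e -> mnorm (fun j => b j + c j) <= 2 * e.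
Proof.
move=> e0 Hb Hc.
case: m b c Hb Hc => [|m] b c Hb Hc.
  by rewrite /mnorm big_ord0 mulr0 sqrtr0 mulr_ge0.
have S0 : 0 <= m.+1%:R^-1 * \sum_(j < m.+1) `|c j| ^+ 2.
  by apply: mulr_ge0; [rewrite invr_ge0 | apply: sumr_ge0 => j _; exact: exprn_ge0].
have Sc : m.+1%:R^-1 * \sum_(j < m.+1) `|c j| ^+ 2 <= e ^+ 2.
  rewrite -(sqr_sqrtr S0); apply: lerXn2r => //; first exact: sqrtr_ge0.
have T : \sum_(j < m.+1) `|b j + c j| ^+ 2 <= \sum_(j < m.+1) (2 * e ^+ 2 + 2 * `|c j| ^+ 2).
  apply: ler_sum => j _; apply: le_trans (sq_ineq _ _) _; rewrite lerD2r.
  rewrite ler_pM2l // lerXn2r //; exact: normr_ge0.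
rewrite big_split /= -mulr_sumr sumr_const card_ord in T.
rewrite /mnorm -(@ger0_norm _ (2 * e)) ?mulr_ge0 // -sqrtr_sqr ler_sqrt ?exprn_ge0 //.
have mp : 0 < m.+1%:R^-1 :> R by rewrite invr_gt0.
apply: le_trans (ler_wpM2l (ltW mp) T) _.
rewrite -mulr_sumr ?mul1r ?mulr1 -[e ^+ 2 *+ _]mulr_natr.
set a := m.+1%:R in mp S0 Sc *; set s := \sum_(j < m.+1) `|c j| ^+ 2 in S0 Sc *.
have a0 : a != 0 by rewrite /a pnatr_eq0.
have -> : a^-1 * (2 * (e ^+ 2 * a) + 2 * s) = 2 * e ^+ 2 + 2 * (a^-1 * s).
  by field.
have -> : (2 * e) ^+ 2 = 4 * e ^+ 2 by ring.
move: Sc; set q := a^-1 * s; set E := e ^+ 2 => Sc.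
lra.
by rewrite mulr_ge0.
Qed.

End S.
Lemma Om_compact (R : realType) (d : nat) (Om : set 'rV[R]_d) :
  closure_of_bounded_domain Om -> compact Om.
Proof.
case=> D [_ _ _ bD ->].
apply: bounded_closed_compact; last exact: closed_closure.
rewrite /bounded_set /bounded_near.
move: bD; rewrite /bounded_set /bounded_near => bD.
near=> M.
have HM : D `<=` [set x | `|x| <= M] by near: M.
have cl : closed (closed_ball_ Num.norm (0 : 'rV[R]_d) M) by exact: closed_closed_ball_.
have sub : D `<=` closed_ball_ Num.norm (0 : 'rV[R]_d) M.
  by move=> y /HM; rewrite /closed_ball_ /= sub0r normrN.
move=> y /(closureS sub); rewrite -(closure_id _).1 //.
by rewrite /closed_ball_ /= sub0r normrN.
Unshelve. all: by end_near.
Qed.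

Lemma cont_bounded (R : realType) (d : nat) (Om : set 'rV[R]_d) (u : 'rV[R]_d -> R) :
  compact Om -> CO Om u -> exists M, forall t, Om t -> `|u t| <= M.
Proof.
move=> cO cu.
have := compact_bounded (continuous_compact cu cO).
case=> M [_ HM]; exists (M + 1) => t Ot.
by apply: (HM (M+1)); [rewrite ltrDl | exists t].
Qed.
Lemma seq_cluster (R : realType) (d : nat) (Om : set 'rV[R]_d)
  (K : set ('rV[R]_d -> R)) (u : nat -> 'rV[R]_d -> R) :
  @compact {uniform` Om -> R} K -> (forall n, K (u n)) ->
  exists2 k, K k & forall e, 0 < e -> forall N, exists2 n, (N <= n)%N &
     forall t, Om t -> `|k t - u n t| < e.
Proof.
move=> cK Ku.
pose v : nat -> {uniform` Om -> R} := u.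
have FK : (v @ \oo) K by exists 0%N => // n _; exact: Ku.
case: (cK _ _ FK) => k [Kk clk].
exists k => // e e0 N.
have A1 : (v @ \oo) (v @` [set n | (N <= n)%N]).
  by exists N => // n /= Nn; exists n.
have B1 : nbhs (k : {uniform` Om -> R}) [set h : {uniform` Om -> R} | forall t, Om t -> `|k t - h t| < e].
  apply/uniform_nbhs; exists [set xy : R * R | ball xy.1 e xy.2]; split.
    by rewrite -entourage_ballE; exists e.
  by move=> h /= H t Ot; have := H t Ot; rewrite /ball /=.
case: (clk _ _ A1 B1) => _ [[n Nn <-] H].
by exists n.
Qed.

Theorem proposition4p1 (R : realType) (d m : nat) (Om : set 'rV[R]_d)
  (X : completeNormedModType R) (iota : ('rV[R]_d -> R) -> X) (CX : R)
  (K : set ('rV[R]_d -> R)) (x : 'I_m -> 'rV[R]_d) (f g : 'rV[R]_d -> R)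
  (eps : R) :
  closure_of_bounded_domain Om ->
  (forall (a : R) (g1 g2 : 'rV[R]_d -> R), CO Om g1 -> CO Om g2 ->
     iota (fun y => a * g1 y + g2 y) = a *: iota g1 + iota g2) ->
  (forall g1 g2 : 'rV[R]_d -> R, CO Om g1 -> CO Om g2 ->
     iota g1 = iota g2 -> {in Om, g1 =1 g2}) ->
  (forall g1 : 'rV[R]_d -> R, CO Om g1 -> `|iota g1| <= CX * supnorm Om g1) ->
  K `<=` CO Om ->
  @compact {uniform` Om -> R} K ->
  (forall i, Om (x i)) ->
  K f ->
  0 < eps ->
  CO Om g ->
  mnorm (fun j => lambda x f j - lambda x g j) <= eps ->
  distC Om g K <= eps ->
  `|iota f - iota g| <= CX * eps + 2 * chebR (iota @` Kweps x K (lambda x f) (2 * eps)).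
Proof.
move=> hOm lin _ bnd KC cK xO Kf eps0 Cg Hfg Hdist.
have Om0 : Om !=set0.
  case: hOm => D [_ _ [t Dt] _ ->]; exists t; exact: subset_closure.
have cO := @Om_compact R d Om hOm.
have CX0 : 0 <= CX.
  have C1 : CO Om (fun _ => 1) by exact: cst_continuous.
  have s1 : 1 <= supnorm Om (fun _ : 'rV[R]_d => 1).
    case: Om0 => t Ot.
    have := @sup_pt R d Om (fun _ => 1) 1 t (fun _ _ => ltac:(by rewrite normr1)) Ot.
    by rewrite normr1.
  have := le_trans (normr_ge0 _) (bnd _ C1).
  by rewrite pmulr_lge0 // (lt_le_trans ltr01 s1).
have [M HM] : exists M, forall k t, K k -> Om t -> `|k t| <= M.
  apply: contrapT => nB.
  have H : forall n : nat, exists p : ('rV[R]_d -> R) * 'rV[R]_d,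
      [/\ K p.1, Om p.2 & n%:R < `|p.1 p.2|].
    move=> n; apply: contrapT => nn; apply: nB; exists n%:R => k t Kk Ot.
    rewrite leNgt; apply/negP => lt; apply: nn; by exists (k, t).
  case: (choice H) => p Hp.
  have Kp : forall n, K (p n).1 by move=> n; case: (Hp n).
  have [k Kk Hk] := @seq_cluster R d Om K _ cK Kp.
  have [Mk HMk] := @cont_bounded R d Om _ cO (KC _ Kk).
  have [n Nn Hn] := Hk 1 ltr01 (Num.Def.trunc (Mk + 1)).+1.
  case: (Hp n) => _ Otn ltn.
  have h1 := Hn _ Otn.
  have h2 := HMk _ Otn.
  have h3 := ler_distD (k (p n).2) 0 ((p n).1 (p n).2).
  rewrite sub0r normrN sub0r normrN in h3.
  have h4 := truncnS_gt (Mk + 1).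
  have h5 : ((Num.Def.trunc (Mk + 1)).+1%:R <= n%:R :> R) by rewrite ler_nat.
  lra.
have M0 : 0 <= M by case: Om0 => t Ot; exact: le_trans (normr_ge0 _) (HM _ _ Kf Ot).
have [Mg HMg] := @cont_bounded R d Om _ cO Cg.
pose E := [set supnorm Om (fun y => g y - h y) | h in K].
have hinf : has_inf E.
  split; first by exists (supnorm Om (fun y => g y - f y)); exists f.
  by exists 0 => _ [h _ <-]; exact: supnorm_ge0.
have H2 : forall n : nat, exists h, K h /\ supnorm Om (fun y => g y - h y) < eps + n.+1%:R^-1.
  move=> n; have [_ [h Kh <-] lt] := inf_adherent (ltac:(by rewrite invr_gt0) : 0 < n.+1%:R^-1 :> R) hinf.
  exists h; split => //; apply: lt_le_trans lt _; rewrite lerD2r; exact: Hdist.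
case: (choice H2) => u Hu.
have Ku : forall n, K (u n) by move=> n; case: (Hu n).
have [h Kh Hh] := @seq_cluster R d Om K _ cK Ku.
have Hgh : forall t, Om t -> `|g t - h t| <= eps.
  move=> t Ot; apply/ler_addgt0Pr => e e0.
  have e20 : 0 < e / 2 by rewrite divr_gt0.
  have [n Nn Hn] := Hh (e / 2) e20 (Num.Def.trunc (2 / e)).
  have ninv : n.+1%:R^-1 < e / 2.
    rewrite invf_plt ?posrE ?ltr0Sn //.
    rewrite invrM ?unitfE ?invr_neq0 ?gt_eqF ?invr_gt0 // invrK mulrC.
    rewrite mulrC; apply: (lt_le_trans (truncnS_gt _)); by rewrite ler_nat.
  have b1 : forall t, Om t -> `|g t - u n t| <= Mg + M.
    move=> s Os; apply: le_trans (ler_normB _ _) _; apply: lerD; [exact: HMg | exact: HM].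
  have s1 := @sup_pt R d Om (fun y => g y - u n y) _ t b1 Ot.
  have s2 := (Hu n).2.
  have h1 := Hn _ Ot.
  have h3 := ler_distD (u n t) (g t) (h t).
  rewrite (distrC (u n t)) in h3.
  simpl in s1.
  move: s1 s2 h1 h3 ninv; set S := supnorm _ _; set A := `|g t - u n t|; set B := `|h t - u n t|; set C := `|g t - h t|; set I := n.+1%:R^-1 => s1 s2 h1 h3 ninv.
  lra.
pose phi := fun y => -1 * g y + h y.
have Cphi : CO Om phi.
  move=> t.
  apply: (@continuousD _ _ (subspace Om) (fun y => -1 * g y) h t); last exact: KC.
  apply: (@continuousM _ (subspace Om) (fun=> -1) g t); [exact: cst_continuous | exact: Cg].
have eqphi : iota phi = iota h - iota g.
  rewrite /phi lin //; last exact: KC.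
  by rewrite scaleN1r addrC.
have Bphi : `|iota h - iota g| <= CX * eps.
  rewrite -eqphi; apply: le_trans (bnd _ Cphi) _; apply: (ler_wpM2l CX0).
  apply: supnorm_le Om0 _ => t Ot; rewrite /phi mulN1r addrC distrC; exact: Hgh.
have Kf' : Kweps x K (lambda x f) (2 * eps) f.
  split => //; exists (lambda x f); split => //.
  rewrite /mnorm big1 ?mulr0 ?sqrtr0 ?mulr_ge0 ?ltW //.
  by move=> j _; rewrite subrr normr0 expr0n.
have Kh' : Kweps x K (lambda x f) (2 * eps) h.
  split => //; exists (lambda x h); split => //.
  have -> : (fun j => lambda x h j - lambda x f j) =
      (fun j => (h (x j) - g (x j)) + (g (x j) - f (x j))).
    by apply: funext => j; rewrite /lambda addrA subrK.
  apply: mnorm_tri; first exact: ltW.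
    by move=> j; rewrite distrC; exact: Hgh.
  have -> : mnorm (fun j => g (x j) - f (x j)) = mnorm (fun j => lambda x f j - lambda x g j).
    by rewrite /mnorm; congr (Num.sqrt (_ * _)); apply: eq_bigr => j _; rewrite distrC.
  exact: Hfg.
have cheb : `|iota f - iota h| / 2 <= chebR (iota @` Kweps x K (lambda x f) (2 * eps)).
  apply: lb_le_inf.
    exists (CX * M), 0 => _ [k [Kk _] <-].
    rewrite /= subr0.
    apply: le_trans (bnd _ (KC _ Kk)) _; apply: (ler_wpM2l CX0).
    apply: supnorm_le Om0 _ => t Ot; exact: HM.
  move=> r [z Hz].
  have a1 : `|iota f - z| <= r by apply: Hz; exists f.
  have a2 : `|iota h - z| <= r by apply: Hz; exists h.
  have a3 := ler_distD z (iota f) (iota h).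
  rewrite (distrC z) in a3.
  rewrite ler_pdivrMr //; lra.
have := ler_distD (iota h) (iota f) (iota g).
lra.
Qed.
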